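(* Let $n,k$ be integers with $2<2k\le n$ such that $\mathrm{Pet}(n,k)$ is non-bipartite. Then either $g_{odd}(\mathrm{Pet}(n,k))=k+3$, or $$\max\Big(\frac{n}{k},\ \min\{\gcd(n,k-1),\gcd(n,k+1)\}+2\Big)\ \le\ g_{odd}(\mathrm{Pet}(n,k))\ \le\ \frac{n}{k}\,\mathrm{par}(k)+k+1,$$ where $\mathrm{par}(k)=1$ if $k$ is odd and $\mathrm{par}(k)=0$ if $k$ is even.
   Context: For integers $n,k$ with $2<2k\le n$, the generalized Petersen graph $\mathrm{Pet}(n,k)$ has vertex set $\{u_0,\dots,u_{n-1}\}\cup\{v_0,\dots,v_{n-1}\}$ and edge set $\{u_iu_{i+1}\}\cup\{u_iv_i\}\cup\{v_iv_{i+k}\}$, $i\in\{0,\dots,n-1\}$, with indices taken modulo $n$. For a non-bipartite graph $G$, the odd girth $g_{odd}(G)$ is the length of a shortest odd cycle of $G$. *)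

(* Defs.v *)
From HB Require Import structures.
From mathcomp Require Import all_boot all_order all_algebra.
Set Implicit Arguments. Unset Strict Implicit. Unset Printing Implicit Defensive.
Import Order.TTheory GRing.Theory Num.Theory.

(* Vertices of Pet(n,k): (false, i) is u_i, (true, i) is v_i, i : 'I_n. *)
Definition pet_vertex (n : nat) := (bool * 'I_n)%type.

Definition pet_arc (n k : nat) (x y : pet_vertex n) : bool :=
  match x, y with
  | (false, i), (false, j) => val j == (val i + 1) %% n
  | (false, i), (true, j) => val j == val i
  | (true, i), (true, j) => val j == (val i + k) %% n
  | _, _ => false
  end.

Definition pet_adj (n k : nat) : rel (pet_vertex n) :=
  fun x y => @pet_arc n k x y || @pet_arc n k y x.

Definition bipartite (T : Type) (adj : rel T) : Prop :=
  exists c : T -> bool, forall x y, adj x y -> c x != c y.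

Definition is_cycle (T : eqType) (adj : rel T) (s : seq T) : Prop :=
  2 < size s /\ uniq s /\ cycle adj s.

Definition is_odd_girth (T : eqType) (adj : rel T) (g : nat) : Prop :=
  (exists s, is_cycle adj s /\ odd (size s) /\ size s = g) /\
  (forall s, is_cycle adj s -> odd (size s) -> g <= size s).

Definition par (k : nat) : nat := if odd k then 1 else 0.

(* Main.v *)
Require Import Defs.
From HB Require Import structures.
From mathcomp Require Import all_boot all_order all_algebra.
Set Warnings "-notation-overridden,-ambiguous-paths".
From mathcomp Require Import zify ring lra.
Import Order.TTheory GRing.Theory Num.Theory.
Local Open Scope ring_scope.
Lemma edge_cases n k (x y : pet_vertex n) : @pet_adj n k x y ->
  (x.1 = false /\ y.1 = false /\ exists e m : int, (e = 1 \/ e = -1) /\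
      (nat_of_ord y.2)%:Z = (nat_of_ord x.2)%:Z + e + m * n%:Z)
  \/ (y.1 = ~~ x.1 /\ nat_of_ord y.2 = nat_of_ord x.2)
  \/ (x.1 = true /\ y.1 = true /\ exists e m : int, (e = 1 \/ e = -1) /\
      (nat_of_ord y.2)%:Z = (nat_of_ord x.2)%:Z + k%:Z * e + m * n%:Z).
Proof.
case: x y => [[] [i hi]] [[] [j hj]]; rewrite /pet_adj /pet_arc /= ?orbF ?orFb.
- move=> hh; right; right; split=>//; split=>//.
  case/orP: hh => /eqP hh.
  + exists 1, (- ((i + k) %/ n)%N%:Z); split; first by left.
    have := divn_eq (i + k) n; lia.
  + exists (-1), (((j + k) %/ n)%N%:Z); split; first by right.
    have := divn_eq (j + k) n; lia.
- move/eqP=> hh; right; left; split=>//.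
- move/eqP=> hh; right; left; split=>//.
- move=> hh; left; split=>//; split=>//.
  case/orP: hh => /eqP hh.
  + exists 1, (- ((i + 1) %/ n)%N%:Z); split; first by left.
    have := divn_eq (i + 1) n; lia.
  + exists (-1), (((j + 1) %/ n)%N%:Z); split; first by right.
    have := divn_eq (j + 1) n; lia.
Qed.
Lemma walk_inv n k (x : pet_vertex n) p : path (@pet_adj n k) x p ->
  exists (A B m : int) (a b s : nat),
   (a + b + s = size p)%N /\ -(a%:Z) <= A <= a%:Z /\ -(b%:Z) <= B <= b%:Z /\
   (exists t : int, A + a%:Z = 2 * t) /\ (exists t : int, B + b%:Z = 2 * t) /\
   (nat_of_ord (last x p).2)%:Z = (nat_of_ord x.2)%:Z + A + k%:Z * B + m * n%:Z /\
   (last x p).1 = x.1 (+) odd s /\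
   (s = 0%N -> if x.1 then a = 0%N else b = 0%N).
Proof.
elim: p x => [|y p IH] x /=.
  move=> _; exists 0, 0, 0, 0%N, 0%N, 0%N; do !split => //; try lia.
  - by exists 0.
  - by exists 0.
  - by case: (x.1).
move/andP=> [hxy hp].
have [A [B [m [a [b [s [h1 [h2 [h3 [[t1 h4] [[t2 h5] [h6 [h7 h8]]]]]]]]]]]]] := IH y hp.
case: (@edge_cases n k x y hxy) => [[ex [ey [e [m' [he hm]]]]]|[[ey hm]|[ex [ey [e [m' [he hm]]]]]]].
- exists (A + e), B, (m + m'), a.+1, b, s; do !split; try lia.
  + case: he => ->; [exists (t1 + 1) | exists t1]; lia.
  + by exists t2.
  + by move=> s0; move: (h8 s0); rewrite ex ey.
- exists A, B, m, a, b, s.+1; do !split; try lia.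
  + by exists t1.
  + by exists t2.
- exists A, (B + e), (m + m'), a, b.+1, s; do !split; try lia.
  + by exists t1.
  + case: he => ->; [exists (t2 + 1) | exists t2]; lia.
  + by move=> s0; move: (h8 s0); rewrite ex ey.
Qed.
Lemma core (n k L a b s : nat) (A B m : int) :
  (1 < k)%N -> (2 * k <= n)%N -> (2 < L)%N -> odd L -> L = (a + b + s)%N -> ~~ odd s ->
  (s = 0%N -> a = 0%N \/ b = 0%N) ->
  -(a%:Z) <= A <= a%:Z -> -(b%:Z) <= B <= b%:Z ->
  (exists t : int, A + a%:Z = 2 * t) -> (exists t : int, B + b%:Z = 2 * t) ->
  A + k%:Z * B + m * n%:Z = 0 ->
  [/\ (m = 0 -> ~~ odd k /\ (k + 3 <= L)%N), (m != 0 -> (n <= k * L)%N) &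
      (minn (gcdn n k.-1) (gcdn n k.+1) + 2 <= L)%N].
Proof.
move=> hk hkn hL oL hLe es hs0 hA hB [t1 h1] [t2 h2] he.
have [w hw] : exists w, L = (2 * w + 1)%N.
  exists L./2. have := odd_double_half L. rewrite oL. lia.
have [u hu] : exists u, s = (2 * u)%N.
  exists s./2. have := odd_double_half s. rewrite (negbTE es). lia.
have hAB : exists t : int, A + B = 2 * t + 1.
  exists (t1 + t2 - (a + b + s)%N%:Z + w%:Z + u%:Z). lia.
case: hAB => t3 h3.
split.
- move=> m0; subst m.
  have hB0 : B != 0 by apply/eqP => B0; subst B; lia.
  have hkA : (k <= a)%N by timeout 20 nia.
  have hb1 : (1 <= b)%N by lia.
  split.
    apply/negP => ok. have [w' hw'] : exists w', k = (2 * w' + 1)%N.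
      exists k./2. have := odd_double_half k. rewrite ok. lia.
    have hA' : A = - (k%:Z * B) by lia.
    rewrite hA' hw' in h3. timeout 20 nia.
  have : s <> 0%N by move=> s0; case: (hs0 s0); lia.
  lia.
- move=> /eqP mn0.
  have hmn : (n%:Z <= `|m * n%:Z|) by rewrite normrM; clear -mn0; nia.
  have e1 : m * n%:Z = - (A + k%:Z * B) by lia.
  rewrite e1 normrN in hmn.
  have hkb : -(k%:Z * b%:Z) <= k%:Z * B <= k%:Z * b%:Z.
    case/andP: hB => hB1 hB2; rewrite -mulrN.
    by rewrite !ler_wpM2l.
  have hka : (a <= k * a)%N by rewrite leq_pmull //; lia.
  rewrite hLe !mulnDr. lia.
- set d1 := gcdn n k.-1; set d2 := gcdn n k.+1.
  have [n1 hn1] : exists n1, n = (n1 * d1)%N by apply/dvdnP; exact: dvdn_gcdl.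
  have [c1 hc1] : exists c1, k.-1 = (c1 * d1)%N by apply/dvdnP; exact: dvdn_gcdr.
  have [n2 hn2] : exists n2, n = (n2 * d2)%N by apply/dvdnP; exact: dvdn_gcdl.
  have [c2 hc2] : exists c2, k.+1 = (c2 * d2)%N by apply/dvdnP; exact: dvdn_gcdr.
  have hk1 : k%:Z = c1%:Z * d1%:Z + 1.
    have : k = (c1 * d1).+1 by rewrite -hc1; lia.
    by move=> ->; rewrite -PoszM; lia.
  have hk2 : k%:Z = c2%:Z * d2%:Z - 1.
    have : k = (c2 * d2).-1 by rewrite -hc2.
    move=> hh. have : (0 < c2 * d2)%N by rewrite -hc2.
    rewrite hh -PoszM; lia.
  have hnz1 : n%:Z = n1%:Z * d1%:Z by rewrite hn1 PoszM.
  have hnz2 : n%:Z = n2%:Z * d2%:Z by rewrite hn2 PoszM.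
  have hAB1 : A + B = d1%:Z * (- (m * n1%:Z) - c1%:Z * B).
    rewrite hk1 hnz1 in he. timeout 20 nia.
  have hAB2 : A - B = d2%:Z * (- (m * n2%:Z) - c2%:Z * B).
    rewrite hk2 hnz2 in he. timeout 20 nia.
  have d1le : (d1 <= k.-1)%N by apply: dvdn_leq; [lia | exact: dvdn_gcdr].
  have d1p : (0 < d1)%N by rewrite gcdn_gt0; apply/orP; left; lia.
  have d2p : (0 < d2)%N by rewrite gcdn_gt0; apply/orP; left; lia.
  set X := - (m * n1%:Z) - c1%:Z * B in hAB1.
  have X0 : X != 0 by apply/eqP => X0; rewrite X0 mulr0 in hAB1; lia.
  have habs : absz (A + B) = (d1 * absz X)%N by rewrite hAB1 abszM.
  have hd1AB : (d1 <= absz (A + B)%R)%N.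
    by rewrite habs leq_pmulr // absz_gt0.
  have hmin1 : (minn d1 d2 <= d1)%N := geq_minl _ _.
  have hmin2 : (minn d1 d2 <= d2)%N := geq_minr _ _.
  case: (posnP s) => s0; last by lia.
  case: (hs0 s0) => ab0.
  + (* a = 0 : pure inner *)
    have A0 : A = 0 by lia.
    have [d1_1 | d1_2] : (d1 <= 1 \/ 2 <= d1)%N by lia.
      lia.
    have [d2_1 | d2_2] : (d2 <= 1 \/ 2 <= d2)%N by lia.
      lia.
    have G1 : coprime d1 d2.
      have Gd : (gcdn d1 d2 %| 2)%N.
        have -> : 2%N = (k.+1 - k.-1)%N by lia.
        apply: dvdn_sub.
          exact: dvdn_trans (dvdn_gcdr _ _) (dvdn_gcdr _ _).
        exact: dvdn_trans (dvdn_gcdl _ _) (dvdn_gcdr _ _).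
      have Gp : (0 < gcdn d1 d2)%N by rewrite gcdn_gt0; apply/orP; left; lia.
      have := dvdn_leq (isT : (0 < 2)%N) Gd => Gle.
      rewrite /coprime; apply/eqP.
      have [G1|G2] : (gcdn d1 d2 = 1 \/ gcdn d1 d2 = 2)%N by lia.
        by [].
      exfalso. have : (2 %| d1)%N by rewrite -G2 dvdn_gcdl.
      case/dvdnP => y hy.
      rewrite A0 add0r hy PoszM in hAB1. rewrite A0 add0r hAB1 in h3. clear -h3; lia.
    have hdB1 : (d1 %| absz B)%N.
      have hB1 : B = d1%:Z * X by rewrite -hAB1 A0 add0r.
      by apply/dvdnP; exists (absz X); rewrite hB1 abszM mulnC.
    have hdB2 : (d2 %| absz B)%N.
      apply/dvdnP; exists (absz (- (m * n2%:Z) - c2%:Z * B)%R).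
      have hB2 : B = d2%:Z * - (- (m * n2%:Z) - c2%:Z * B).
        by rewrite mulrN -hAB2 A0 add0r opprK.
      by rewrite {1}hB2 abszM abszN mulnC.
    have hdd : (d1 * d2 %| absz B)%N by rewrite Gauss_dvd // hdB1 hdB2.
    have Bp : (0 < absz B)%N.
      by rewrite absz_gt0; apply/eqP => B0; move: h3; rewrite A0 B0 add0r; clear; lia.
    have := dvdn_leq Bp hdd => hle.
    have hm2 : (minn d1 d2 * 2 <= d1 * d2)%N by apply: leq_mul.
    have hBb : (absz B <= L)%N by move: hB; rewrite hLe s0 ab0; clear; lia.
    clear -hle hBb d1_2 d2_2 hmin1 hmin2 hm2; lia.
  + (* b = 0 : pure outer *)
    have B0 : B = 0 by lia.
    have m0 : m != 0 by apply/eqP => m0; subst m; lia.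
    have hmn : (n%:Z <= `|m * n%:Z|) by rewrite normrM; clear -m0; nia.
    have e1 : m * n%:Z = - A by lia.
    rewrite e1 normrN in hmn.
    lia.
Qed.
Lemma cycle_bounds n k (s : seq (pet_vertex n)) : (1 < k)%N -> (2 * k <= n)%N ->
  is_cycle (@pet_adj n k) s -> odd (size s) ->
  (minn (gcdn n k.-1) (gcdn n k.+1) + 2 <= size s)%N /\
  ((~~ odd k /\ (k + 3 <= size s)%N) \/ (n <= k * size s)%N).
Proof.
move=> hk hkn [hs [_ hc]] os.
case: s hs hc os => [//|x p] hs hc os.
rewrite /= in hc.
have [A [B [m [a [b [s [h1 [h2 [h3 [h4 [h5 [h6 [h7 h8]]]]]]]]]]]]] := @walk_inv n k x (rcons p x) hc.
rewrite last_rcons size_rcons in h1 h6 h7.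
have es : ~~ odd s by move: h7; case: (x.1); case: (odd s).
have hs0 : s = 0%N -> a = 0%N \/ b = 0%N by move=> /h8; case: (x.1); [left|right].
have he : A + k%:Z * B + m * n%:Z = 0 by lia.
have [c1 c2 c3] := @core n k (size (x :: p)) a b s A B m hk hkn hs os (esym h1) es hs0 h2 h3 h4 h5 he.
split => //.
case: (eqVneq m 0) => m0.
  by left; apply: c1.
by right; apply: c2.
Qed.
Definition vx n (hn : (0 < n)%N) (b : bool) (i : nat) : pet_vertex n :=
  (b, Ordinal (ltn_pmod i hn)).

Lemma adj_sym n k (x y : pet_vertex n) : @pet_adj n k x y = @pet_adj n k y x.
Proof. by rewrite /pet_adj orbC. Qed.

Lemma adj_out n k hn i : @pet_adj n k (@vx n hn false i) (@vx n hn false i.+1).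
Proof. by rewrite /pet_adj /pet_arc /= modnDml addn1 eqxx. Qed.

Lemma adj_in n k hn i : @pet_adj n k (@vx n hn true i) (@vx n hn true (i + k)).
Proof. by rewrite /pet_adj /pet_arc /= modnDml eqxx. Qed.

Lemma adj_sp n k hn i : @pet_adj n k (@vx n hn false i) (@vx n hn true i).
Proof. by rewrite /pet_adj /pet_arc /= eqxx. Qed.

Lemma vx_eq n hn b i j : (i %% n = j %% n)%N -> @vx n hn b i = @vx n hn b j.
Proof. by move=> h; congr (_, _); apply: val_inj. Qed.

Lemma vx_inj n hn b b' i j : @vx n hn b i = @vx n hn b' j -> b = b' /\ (i %% n = j %% n)%N.
Proof. by move=> h; split; [exact: (congr1 fst h) | exact: (congr1 (fun x => val x.2) h)]. Qed.

Lemma last_iota m len : last m (iota m.+1 len) = (m + len)%N.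
Proof. by elim: len m => [|len IH] m /=; [rewrite addn0 | rewrite IH addnS]. Qed.

Lemma path_map_iota (T : Type) (e : rel T) (f : nat -> T) m len :
  (forall i, e (f i) (f i.+1)) -> path e (f m) (map f (iota m.+1 len)).
Proof. by move=> he; elim: len m => [|len IH] m //=; rewrite he IH. Qed.

Lemma last_map_iota (T : Type) (f : nat -> T) m len :
  last (f m) (map f (iota m.+1 len)) = f (m + len)%N.
Proof. by rewrite last_map last_iota. Qed.

Lemma uniq_map_vx n hn b s : (forall i, i \in s -> (i < n)%N) -> uniq s ->
  uniq (map (@vx n hn b) s).
Proof.
move=> hs us; rewrite map_inj_in_uniq // => i j hi hj /vx_inj [_].
by rewrite !modn_small // hs.
Qed.

Lemma notin_map_vx n hn b b' i (s : seq nat) : b != b' ->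
  @vx n hn b i \notin map (@vx n hn b') s.
Proof.
move=> hb; apply/mapP => [[j _ /vx_inj [hbb _]]].
by rewrite hbb eqxx in hb.
Qed.
Lemma cycA n k (hn : (0 < n)%N) : (0 < k)%N -> (k < n)%N ->
  is_cycle (@pet_adj n k)
    (map (@vx n hn false) (iota 0 k.+1) ++ [:: @vx n hn true k; @vx n hn true 0]).
Proof.
move=> hk hkn; split; [|split].
- by rewrite size_cat size_map size_iota /= addn2.
- rewrite cat_uniq; apply/and3P; split.
  + apply: uniq_map_vx; [move=> i; rewrite mem_iota; lia | exact: iota_uniq].
  + apply/hasPn => y; rewrite !inE => /orP [] /eqP -> ; exact: notin_map_vx.
  + rewrite /= inE andbT; apply/eqP => /vx_inj [_]; rewrite !modn_small //; lia.
- rewrite /= rcons_cat cat_path path_map_iota; last exact: adj_out.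
  rewrite last_map_iota /= add0n adj_sp /=.
  rewrite adj_sym.
  have -> : @vx n hn true k = @vx n hn true (0 + k) by [].
  rewrite adj_in adj_sym adj_sp //.
Qed.
Lemma uniq_mulk k q : (0 < k)%N -> uniq (map (muln^~ k) (iota 0 q)).
Proof.
move=> hk; rewrite map_inj_in_uniq ?iota_uniq // => i j _ _ /= h.
by apply/eqP; rewrite -(eqn_pmul2r hk) h.
Qed.

Lemma mem_mulk k q i : i \in map (muln^~ k) (iota 0 q) -> exists j, (j < q)%N /\ i = (j * k)%N.
Proof. by case/mapP => j; rewrite mem_iota add0n => /andP [_ hj] ->; exists j. Qed.

Lemma cycB n k (hn : (0 < n)%N) q r : (0 < k)%N -> (0 < q)%N -> n = (q * k + r.+1)%N ->
  is_cycle (@pet_adj n k)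
    (map (fun j => @vx n hn true (j * k)) (iota 0 q.+1) ++
     (map (@vx n hn false) (iota (q * k) r.+1) ++ [:: @vx n hn false 0])).
Proof.
move=> hk hq hnq; split; [|split].
- rewrite !size_cat !size_map !size_iota /=; lia.
- have -> : map (fun j => @vx n hn true (j * k)) (iota 0 q.+1) =
            map (@vx n hn true) (map (muln^~ k) (iota 0 q.+1)) by rewrite -map_comp.
  rewrite cat_uniq; apply/and3P; split.
  + apply: uniq_map_vx; last exact: uniq_mulk.
    move=> i /mem_mulk [j [hj ->]].
    have : (j * k <= q * k)%N by rewrite leq_mul2r -ltnS hj orbT.
    lia.
  + apply/hasPn => y; rewrite mem_cat mem_seq1 => /orP [].
      by case/mapP => j _ ->; exact: notin_map_vx.
    by move/eqP ->; exact: notin_map_vx.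
  + rewrite cat_uniq; apply/and3P; split.
    * apply: uniq_map_vx; [move=> i; rewrite mem_iota; lia | exact: iota_uniq].
    * apply/hasPn => y; rewrite inE => /eqP ->.
      apply/mapP => [[j hj /vx_inj [_ hj0]]].
      move: hj; rewrite mem_iota => hj.
      rewrite mod0n modn_small in hj0; last lia.
      have : (q * k >= k)%N by rewrite leq_pmull.
      lia.
    * by [].
- rewrite /= rcons_cat cat_path (@path_map_iota _ _ (fun j => @vx n hn true (j * k))); last first.
    by move=> i; rewrite mulSnr; exact: adj_in.
  rewrite (@last_map_iota _ (fun j => @vx n hn true (j * k))) add0n /= rcons_cat cat_path.
  apply/andP; split.
    by rewrite adj_sym adj_sp.
  rewrite path_map_iota; last exact: adj_out.
  rewrite last_map_iota /=.
  have -> : @vx n hn false 0 = @vx n hn false (q * k + r).+1.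
    by apply: vx_eq; rewrite mod0n -addnS -hnq modnn.
  rewrite adj_out /=.
  have -> : @vx n hn true (0 * k) = @vx n hn true (q * k + r).+1.
    by apply: vx_eq; rewrite mul0n mod0n -addnS -hnq modnn.
  by rewrite adj_sp.
Qed.
Lemma cycC n k (hn : (0 < n)%N) q : (0 < k)%N -> (2 < q)%N -> n = (q * k)%N ->
  is_cycle (@pet_adj n k) (map (fun j => @vx n hn true (j * k)) (iota 0 q)).
Proof.
move=> hk hq hnq; split; [|split].
- by rewrite size_map size_iota.
- have -> : map (fun j => @vx n hn true (j * k)) (iota 0 q) =
            map (@vx n hn true) (map (muln^~ k) (iota 0 q)) by rewrite -map_comp.
  apply: uniq_map_vx; last exact: uniq_mulk.
  move=> i /mem_mulk [j [hj ->]].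
  rewrite hnq ltn_mul2r hk //.
- case: q hq hnq => [//|q] hq hnq.
  rewrite /=.
  have -> : rcons [seq @vx n hn true (j * k) | j <- iota 1 q] (@vx n hn true (0 * k))
          = [seq @vx n hn true (j * k) | j <- iota 1 q.+1].
    rewrite -[q.+1]addn1 iotaD map_cat cats1 /=; congr rcons.
    by apply: vx_eq; rewrite mul0n mod0n add1n -hnq modnn.
  rewrite (@path_map_iota _ _ (fun j => @vx n hn true (j * k))) //.
  by move=> i; rewrite mulSnr; exact: adj_in.
Qed.
Lemma bip n k : odd k -> ~~ odd n -> bipartite (@pet_adj n k).
Proof.
move=> ok en; exists (fun x : pet_vertex n => x.1 (+) odd (nat_of_ord x.2)).
case=> [[] [i hi]] [[] [j hj]]; rewrite /pet_adj /pet_arc /= ?orbF ?orFb.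
- case/orP => /eqP ->; rewrite odd_mod ?(negbTE en) // oddD ok;
    by case: (odd _).
- by move/eqP ->; case: (odd _).
- by move/eqP ->; case: (odd _).
- case/orP => /eqP ->; rewrite odd_mod ?(negbTE en) // addn1 /=;
    by case: (odd _).
Qed.
Theorem theorem2 (n k : nat) (hk : (2 < 2 * k)%N) (hkn : (2 * k <= n)%N)
    (hnb : ~ bipartite (@pet_adj n k)) (g : nat)
    (hg : is_odd_girth (@pet_adj n k) g) :
  g = (k + 3)%N \/
  (Num.max (n%:Q / k%:Q) ((minn (gcdn n k.-1) (gcdn n k.+1))%:Q + 2) <= g%:Q /\
   g%:Q <= n%:Q / k%:Q * (par k)%:Q + k%:Q + 1).
Proof.
have hk1 : (1 < k)%N by lia.
have hk0 : (0 < k)%N by lia.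
have hn : (0 < n)%N by lia.
have hkn' : (k < n)%N by lia.
case: hg => [[s [hcs [os hsg]]] hmin].
have [gcdb alt] := @cycle_bounds n k s hk1 hkn hcs os.
rewrite hsg in gcdb alt os.
case: (eqVneq g (k + 3)%N) => [-> | gne]; first by left.
right.
have evenA : ~~ odd k -> (g <= k + 3)%N.
  move=> ek.
  have := hmin _ (@cycA n k hn hk0 hkn').
  rewrite size_cat size_map size_iota /= => h; apply: leq_trans (h _) _; last lia.
  by rewrite addn2 /= ek.
have lower : (n <= k * g)%N.
  case: alt => [[ek hg3] | //]; exfalso.
  have := evenA ek; lia.
have hkQ : (0 : rat) < k%:Q by rewrite ltr0z; lia.
have hkQ0 : k%:Q != (0 : rat) by rewrite lt0r_neq0.
have e1 : (1 : rat) = (1%:Z)%:~R by [].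
have e2 : (2 : rat) = (2%:Z)%:~R by [].
split.
  rewrite ge_max; apply/andP; split.
    rewrite ler_pdivrMr // -intrM ler_int; lia.
  by rewrite e2 -intrD ler_int; lia.
rewrite /par; case: (boolP (odd k)) => ok /=; last first.
  have := evenA ok => h.
  have : (g <= k + 1)%N.
    have : g <> (k + 2)%N by move=> e; move: os; rewrite e oddD (negbTE ok).
    lia.
  by rewrite mulr0 add0r e1 -intrD ler_int; lia.
have on : odd n.
  by case: (boolP (odd n)) => // en; case: hnb; exact: (@bip n k ok en).
have up : (g * k <= n + k * k.+1)%N.
  have hnd := divn_eq n k.
  set q := (n %/ k)%N in hnd; set r := (n %% k)%N in hnd.
  have hr : (r < k)%N by rewrite ltn_mod.
  have hq : (2 <= q)%N by rewrite leq_divRL //; lia.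
  case: (posnP r) => r0.
    have oq : odd q by move: on; rewrite hnd r0 addn0 oddM ok andbT.
    have hq3 : (2 < q)%N by case: q oq hq {hnd} => [|[|[]]].
    have hnq : n = (q * k)%N by rewrite hnd r0 addn0.
    have := hmin _ (@cycC n k hn q hk0 hq3 hnq).
    rewrite size_map size_iota => /(_ oq) h.
    have : (g * k <= q * k)%N by rewrite leq_mul2r h orbT.
    lia.
  case: r r0 hnd hr => [//|r'] _ hnd hr.
  have := hmin _ (@cycB n k hn q r' hk0 (ltnW hq) hnd).
  rewrite !size_cat !size_map !size_iota /= => H.
  have oL : ~~ odd (q + (r'.+1 + 1)).
    move: on; rewrite hnd !oddD oddM ok /= andbT.
    by case: (odd q); case: (odd r').
  have h := H oL.
  have : (g * k <= (q.+1 + (r'.+1 + 1)) * k)%N by rewrite leq_mul2r h orbT.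
  move=> h'.
  have B : (r'.+1 * k + k <= r'.+1 + k * k)%N by clear -hr; nia.
  rewrite hnd; clear -h' B; nia.
have -> : n%:Q / k%:Q * (1%:Z)%:~R + k%:Q + 1 = (n%:Q + k%:Q * (k%:Q + 1)) / k%:Q.
  by field.
rewrite ler_pdivlMr // e1 -!intrD -!intrM -intrD ler_int; lia.
Qed.
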